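(* Let $k\ge 3$ be odd and $r\ge 2$ an integer. Let $G$ be the graph with vertex set $\{u,v_1,\dots,v_{k-1},s_1,\dots,s_{r-1},w_1,\dots,w_{r-1}\}$ and edge set $\{v_{i-1}v_i\mid 1\le i\le k\}\cup\{s_{i-1}s_i\mid 1\le i\le r-1\}\cup\{w_{i-1}w_i\mid 1\le i\le r-1\}$, where $v_0=v_k=s_0=w_0=u$ (i.e. a cycle $C_k$ with two paths on $r$ vertices each attached by an endpoint to the same cycle vertex $u$). Then $G$ is not odd-periodic, i.e. the Grover walk on $G$ is either not periodic or has even period.
   Context: For a simple connected finite graph $G=(V,E)$, let $\mathcal{A}=\{(u,v),(v,u)\mid uv\in E\}$ be the set of arcs; for an arc $e=(u,v)$ write $o(e)=u$, $t(e)=v$, $\bar e=(v,u)$. The Grover walk has time evolution $U$ on $\mathbb{C}^{\mathcal{A}}$ with $U_{e,f}=2/\deg t(f)$ if $t(f)=o(e)$, $e\neq\bar f$; $U_{e,f}=2/\deg t(f)-1$ if $e=\bar f$; $0$ otherwise. $G$ is periodic if $U^m=I$ for some positive integer $m$; the least such $m$ is the period; $G$ is odd-periodic if it is periodic with odd period. *)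

(* Defs.v *)
From HB Require Import structures.
From mathcomp Require Import all_boot all_order all_algebra.
Set Implicit Arguments. Unset Strict Implicit. Unset Printing Implicit Defensive.
Import Order.TTheory GRing.Theory Num.Theory.
Local Open Scope ring_scope.

(* A simple graph is given by a symmetric irreflexive relation adj on a finType. *)

Section Grover.
Variables (T : finType) (adj : rel T).

Definition arc := {e : T * T | adj e.1 e.2}.

Definition org (e : arc) : T := (val e).1.
Definition term (e : arc) : T := (val e).2.

Definition deg (x : T) : nat := #|[set y | adj x y]|.

Definition grover_entry (e f : arc) : rat :=
  if term f == org e then
    if (val e == ((val f).2, (val f).1)) then 2 / (deg (term f))%:R - 1
    else 2 / (deg (term f))%:R
  else 0.

Definition grover_U : 'M[rat]_#|{: arc}| :=
  \matrix_(i, j) grover_entry (enum_val i) (enum_val j).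

Definition is_period (m : nat) : Prop :=
  (0 < m)%N /\ grover_U ^+ m = 1%:M /\
  (forall m' : nat, (0 < m')%N -> (m' < m)%N -> grover_U ^+ m' <> 1%:M).

Definition periodic : Prop := exists m : nat, (0 < m)%N /\ grover_U ^+ m = 1%:M.

Definition odd_periodic : Prop := exists m : nat, is_period m /\ odd m.

End Grover.

(* Vertices are 'I_(k + 2*(r-1)) with the labelling
     u = 0, v_i = i (1 <= i <= k-1), s_i = k-1+i, w_i = k-1+(r-1)+i (1 <= i <= r-1),
   and v_0 = v_k = s_0 = w_0 = u. *)

Definition vpos (k i : nat) : nat := if (i == 0)%N || (i == k)%N then 0%N else i.
Definition spos (k i : nat) : nat := if i == 0%N then 0%N else (k - 1 + i)%N.
Definition wpos (k r i : nat) : nat := if i == 0%N then 0%N else (k - 1 + (r - 1) + i)%N.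

Definition nat_edge (p q a b : nat) : bool :=
  ((p == a) && (q == b)) || ((p == b) && (q == a)).

Definition cycle_paths_adj (k r : nat) : rel 'I_(k + 2 * (r - 1)) :=
  fun p q =>
    [|| [exists i : 'I_(k.+1), (0 < i)%N && nat_edge p q (vpos k i.-1) (vpos k i)],
        [exists i : 'I_r, (0 < i)%N && nat_edge p q (spos k i.-1) (spos k i)]
      | [exists i : 'I_r, (0 < i)%N && nat_edge p q (wpos k r i.-1) (wpos k r i)]].
Arguments cycle_paths_adj k r : clear implicits.

(* Main.v *)
Require Import Defs.
From mathcomp Require Import all_boot all_order all_algebra.
From mathcomp Require Import zify.
Import Order.TTheory GRing.Theory Num.Theory.
Set Implicit Arguments. Unset Strict Implicit. Unset Printing Implicit Defensive.
Definition Anat (k r p q : nat) : bool :=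
    [|| [exists i : 'I_(k.+1), (0 < i)%N && nat_edge p q (vpos k i.-1) (vpos k i)],
        [exists i : 'I_r, (0 < i)%N && nat_edge p q (spos k i.-1) (spos k i)]
      | [exists i : 'I_r, (0 < i)%N && nat_edge p q (wpos k r i.-1) (wpos k r i)]].

Lemma adjE k r (p q : 'I_(k + 2 * (r - 1))) : cycle_paths_adj k r p q = Anat k r p q.
Proof. by []. Qed.

Ltac crunch := rewrite /nat_edge /spos /wpos /vpos /=; repeat (case: ifP => ?); lia.

Lemma nat_edgeC p q a b : nat_edge p q a b = nat_edge q p a b.
Proof. by rewrite /nat_edge; case: (p == a) (q == b) (p == b) (q == a) => [] [] [] []. Qed.

Lemma AnatC k r p q : Anat k r p q = Anat k r q p.
Proof.
rewrite /Anat.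
congr [|| _, _ | _]; apply: eq_existsb => i; by rewrite nat_edgeC.
Qed.

Lemma sadj k r i y : (3 <= k)%N -> (2 <= r)%N -> (0 < i)%N -> (i <= r - 1)%N ->
  Anat k r (k - 1 + i) y = (y == spos k i.-1) || ((i < r - 1)%N && (y == spos k i.+1)).
Proof.
move=> hk hr i0 ir; rewrite /Anat.
have -> : [exists j : 'I_(k.+1), (0 < j)%N && nat_edge (k - 1 + i) y (vpos k j.-1) (vpos k j)] = false.
  apply/existsP => -[[j hj] /= /andP[j0]]; crunch.
have -> : [exists j : 'I_r, (0 < j)%N && nat_edge (k - 1 + i) y (wpos k r j.-1) (wpos k r j)] = false.
  apply/existsP => -[[j hj] /= /andP[j0]]; crunch.
rewrite /= orbF; apply/idP/idP.
  case/existsP => -[j hj] /= /andP[j0]; crunch.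
case/orP => [E|/andP[h1 E]]; apply/existsP.
  have hir : (i < r)%N by lia.
  by exists (Ordinal hir) => /=; move: E; crunch.
have hir : (i.+1 < r)%N by lia.
by exists (Ordinal hir) => /=; move: E; crunch.
Qed.

Lemma wadj k r i y : (3 <= k)%N -> (2 <= r)%N -> (0 < i)%N -> (i <= r - 1)%N ->
  Anat k r (k - 1 + (r - 1) + i) y = (y == wpos k r i.-1) || ((i < r - 1)%N && (y == wpos k r i.+1)).
Proof.
move=> hk hr i0 ir; rewrite /Anat.
have -> : [exists j : 'I_(k.+1), (0 < j)%N && nat_edge (k - 1 + (r - 1) + i) y (vpos k j.-1) (vpos k j)] = false.
  apply/existsP => -[[j hj] /= /andP[j0]]; crunch.
have -> : [exists j : 'I_r, (0 < j)%N && nat_edge (k - 1 + (r - 1) + i) y (spos k j.-1) (spos k j)] = false.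
  apply/existsP => -[[j hj] /= /andP[j0]]; crunch.
rewrite /=; apply/idP/idP.
  case/existsP => -[j hj] /= /andP[j0]; crunch.
case/orP => [E|/andP[h1 E]]; apply/existsP.
  have hir : (i < r)%N by lia.
  by exists (Ordinal hir) => /=; move: E; crunch.
have hir : (i.+1 < r)%N by lia.
by exists (Ordinal hir) => /=; move: E; crunch.
Qed.
Local Open Scope ring_scope.

Definition dv (T : finType) (adj : rel T) (p q : T) : 'cV[rat]_#|{: Defs.arc adj}| :=
  \col_i ((val (enum_val i) == (p, q))%:R).

Lemma Udv (T : finType) (adj : rel T) (p q : T) (H : adj p q) i :
  (grover_U adj *m dv adj p q) i 0 =
  if (val (enum_val i)).1 == q then 2 / (deg adj q)%:R - (val (enum_val i) == (q, p))%:R else 0.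
Proof.
rewrite !mxE (bigD1 (enum_rank (exist (fun e : T * T => adj e.1 e.2) (p, q) H))) //=.
rewrite big1 ?addr0.
  rewrite /grover_U /dv !mxE enum_rankK /= eqxx mulr1 /grover_entry /term /org /=.
  rewrite eq_sym; case: ifP => // _; case: ifP => _; by rewrite ?subr0.
move=> j hj; rewrite /grover_U /dv !mxE.
case: eqP => [e|]; last by rewrite mulr0.
case/eqP: hj; rewrite -[j]enum_valK; congr enum_rank; apply: val_inj; exact: e.
Qed.

Lemma Uinner (T : finType) (adj : rel T) (p q n : T) (H : adj p q) :
  p != n -> (forall y, adj q y = (y == p) || (y == n)) ->
  grover_U adj *m dv adj p q = dv adj q n.
Proof.
move=> pn hq.
have dq : deg adj q = 2%N.
  rewrite /deg (_ : [set y | adj q y] = [set p; n]) ?cards2 ?pn //.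
  by apply/setP => y; rewrite !inE hq.
apply/matrixP => i j; rewrite ord1 (Udv H) /dv mxE dq.
case: (enum_val i) => [[a b] hab] /=.
case: eqP => [ea|na]; last first.
  by rewrite xpair_eqE; case: eqP.
move: hab; rewrite /= ea hq => /orP[] /eqP ->.
  by rewrite !xpair_eqE !eqxx /= (negbTE pn) divff // subrr.
by rewrite !xpair_eqE !eqxx /= eq_sym (negbTE pn) divff // subr0.
Qed.

Lemma Uleaf (T : finType) (adj : rel T) (p q : T) (H : adj p q) :
  (forall y, adj q y = (y == p)) ->
  grover_U adj *m dv adj p q = dv adj q p.
Proof.
move=> hq.
have dq : deg adj q = 1%N.
  rewrite /deg (_ : [set y | adj q y] = [set p]) ?cards1 //.
  by apply/setP => y; rewrite !inE hq.
apply/matrixP => i j; rewrite ord1 (Udv H) /dv mxE dq.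
case: (enum_val i) => [[a b] hab] /=.
case: eqP => [ea|na]; last first.
  by rewrite xpair_eqE; case: eqP.
move: hab; rewrite /= ea hq => /eqP ->.
by rewrite eqxx.
Qed.

Lemma Uhub (T : finType) (adj : rel T) (p p' q : T) (H : adj p q) (H' : adj p' q) :
  grover_U adj *m (dv adj p q - dv adj p' q) = - (dv adj q p - dv adj q p').
Proof.
apply/matrixP => i j; rewrite ord1 mulmxBr.
rewrite (_ : (grover_U adj *m dv adj p q - grover_U adj *m dv adj p' q) i 0 = (grover_U adj *m dv adj p q) i 0 - (grover_U adj *m dv adj p' q) i 0); last by rewrite !mxE.
rewrite (Udv H) (Udv H') /dv !mxE.
case: (enum_val i) => [[a b] hab] /=.
case: eqP => [ea|na].
  by rewrite opprB opprB addrC addrA subrK.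
by rewrite !xpair_eqE; case: eqP => //; rewrite subrr oppr0.
Qed.

Definition sv k r (d : 'I_(k + 2 * (r - 1))) (i : nat) : 'I_(k + 2 * (r - 1)) := insubd d (spos k i).
Definition wv k r (d : 'I_(k + 2 * (r - 1))) (i : nat) : 'I_(k + 2 * (r - 1)) := insubd d (wpos k r i).

Lemma val_sv k r d i : (3 <= k)%N -> (2 <= r)%N -> (i <= r - 1)%N -> val (@sv k r d i) = spos k i.
Proof. move=> hk hr h; rewrite val_insubd ifT //; rewrite /spos; case: ifP => ?; lia. Qed.
Lemma val_wv k r d i : (3 <= k)%N -> (2 <= r)%N -> (i <= r - 1)%N -> val (@wv k r d i) = wpos k r i.
Proof. move=> hk hr h; rewrite val_insubd ifT //; rewrite /wpos; case: ifP => ?; lia. Qed.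

Lemma adj_sv k r d i y : (3 <= k)%N -> (2 <= r)%N -> (0 < i)%N -> (i <= r - 1)%N ->
  cycle_paths_adj k r (@sv k r d i) y =
  (y == sv d i.-1) || ((i < r - 1)%N && (y == sv d i.+1)).
Proof.
move=> hk hr i0 ir.
rewrite adjE val_sv // (_ : spos k i = k - 1 + i)%N; last by rewrite /spos; case: ifP => ?; lia.
rewrite sadj //.
have e1 : (y == sv d i.-1) = (val y == spos k i.-1) by rewrite -val_eqE val_sv //; lia.
rewrite e1; congr (_ || _).
case: ltnP => // h /=.
by rewrite -val_eqE val_sv //; lia.
Qed.

Lemma adj_wv k r d i y : (3 <= k)%N -> (2 <= r)%N -> (0 < i)%N -> (i <= r - 1)%N ->
  cycle_paths_adj k r (@wv k r d i) y =
  (y == wv d i.-1) || ((i < r - 1)%N && (y == wv d i.+1)).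
Proof.
move=> hk hr i0 ir.
rewrite adjE val_wv // (_ : wpos k r i = k - 1 + (r - 1) + i)%N; last by rewrite /wpos; case: ifP => ?; lia.
rewrite wadj //.
have e1 : (y == wv d i.-1) = (val y == wpos k r i.-1) by rewrite -val_eqE val_wv //; lia.
rewrite e1; congr (_ || _).
case: ltnP => // h /=.
by rewrite -val_eqE val_wv //; lia.
Qed.

Lemma adjC k r (p q : 'I_(k + 2 * (r - 1))) : cycle_paths_adj k r p q = cycle_paths_adj k r q p.
Proof. by rewrite !adjE AnatC. Qed.

Definition xo k r d i := dv (cycle_paths_adj k r) (@sv k r d i.-1) (sv d i)
                       - dv (cycle_paths_adj k r) (@wv k r d i.-1) (wv d i).
Definition xi k r d i := dv (cycle_paths_adj k r) (@sv k r d i) (sv d i.-1)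
                       - dv (cycle_paths_adj k r) (@wv k r d i) (wv d i.-1).

Lemma sv_neq k r d a b : (3 <= k)%N -> (2 <= r)%N -> (a <= r - 1)%N -> (b <= r - 1)%N -> a <> b ->
  @sv k r d a != sv d b.
Proof. move=> hk hr ha hb ab; rewrite -val_eqE !val_sv // /spos; repeat case: ifP => ?; lia. Qed.
Lemma wv_neq k r d a b : (3 <= k)%N -> (2 <= r)%N -> (a <= r - 1)%N -> (b <= r - 1)%N -> a <> b ->
  @wv k r d a != wv d b.
Proof. move=> hk hr ha hb ab; rewrite -val_eqE !val_wv // /wpos; repeat case: ifP => ?; lia. Qed.

Lemma step_out k r d i : (3 <= k)%N -> (2 <= r)%N -> (0 < i)%N -> (i < r - 1)%N ->
  grover_U (cycle_paths_adj k r) *m xo d i = xo d i.+1.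
Proof.
move=> hk hr i0 ir.
have ir' : (i <= r - 1)%N by lia.
have H1 : cycle_paths_adj k r (sv d i.-1) (sv d i) by rewrite adjC adj_sv // eqxx.
have H2 : cycle_paths_adj k r (wv d i.-1) (wv d i) by rewrite adjC adj_wv // eqxx.
have p1 : sv d i.-1 != sv d i.+1 by apply: sv_neq => //; lia.
have p2 : wv d i.-1 != wv d i.+1 by apply: wv_neq => //; lia.
have q1 : forall y, cycle_paths_adj k r (sv d i) y = (y == sv d i.-1) || (y == sv d i.+1).
  by move=> y; rewrite adj_sv // ir.
have q2 : forall y, cycle_paths_adj k r (wv d i) y = (y == wv d i.-1) || (y == wv d i.+1).
  by move=> y; rewrite adj_wv // ir.
by rewrite /xo mulmxBr (Uinner H1 p1 q1) (Uinner H2 p2 q2).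
Qed.

Lemma step_leaf k r d : (3 <= k)%N -> (2 <= r)%N ->
  grover_U (cycle_paths_adj k r) *m xo d (r - 1) = xi d (r - 1).
Proof.
move=> hk hr.
have H1 : cycle_paths_adj k r (sv d (r - 1).-1) (sv d (r - 1)) by rewrite adjC adj_sv // ?eqxx //; lia.
have H2 : cycle_paths_adj k r (wv d (r - 1).-1) (wv d (r - 1)) by rewrite adjC adj_wv // ?eqxx //; lia.
have q1 : forall y, cycle_paths_adj k r (sv d (r - 1)) y = (y == sv d (r - 1).-1).
  by move=> y; rewrite adj_sv // ?ltnn ?orbF //; lia.
have q2 : forall y, cycle_paths_adj k r (wv d (r - 1)) y = (y == wv d (r - 1).-1).
  by move=> y; rewrite adj_wv // ?ltnn ?orbF //; lia.
by rewrite /xo mulmxBr (Uleaf H1 q1) (Uleaf H2 q2).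
Qed.

Lemma step_in k r d i : (3 <= k)%N -> (2 <= r)%N -> (1 < i)%N -> (i <= r - 1)%N ->
  grover_U (cycle_paths_adj k r) *m xi d i = xi d i.-1.
Proof.
move=> hk hr i0 ir.
have ei : i.-1.+1 = i by lia.
have i1 : (0 < i.-1)%N by lia.
have i2 : (i.-1 <= r - 1)%N by lia.
have i3 : (i.-1 < r - 1)%N by lia.
have H1 : cycle_paths_adj k r (sv d i) (sv d i.-1).
  by rewrite adjC adj_sv // ei ir eqxx orbT.
have H2 : cycle_paths_adj k r (wv d i) (wv d i.-1).
  by rewrite adjC adj_wv // ei ir eqxx orbT.
have p1 : sv d i != sv d i.-1.-1 by apply: sv_neq => //; lia.
have p2 : wv d i != wv d i.-1.-1 by apply: wv_neq => //; lia.
have q1 : forall y, cycle_paths_adj k r (sv d i.-1) y = (y == sv d i) || (y == sv d i.-1.-1).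
  by move=> y; rewrite adj_sv // ei ir orbC.
have q2 : forall y, cycle_paths_adj k r (wv d i.-1) y = (y == wv d i) || (y == wv d i.-1.-1).
  by move=> y; rewrite adj_wv // ei ir orbC.
by rewrite /xi mulmxBr (Uinner H1 p1 q1) (Uinner H2 p2 q2).
Qed.

Lemma step_hub k r d : (3 <= k)%N -> (2 <= r)%N ->
  grover_U (cycle_paths_adj k r) *m xi d 1 = - xo d 1.
Proof.
move=> hk hr.
have e : wv d 0 = sv d 0 by apply: val_inj; rewrite val_wv ?val_sv.
have H1 : cycle_paths_adj k r (sv d 1) (sv d 0) by rewrite adj_sv ?eqxx //; lia.
have H2 : cycle_paths_adj k r (wv d 1) (sv d 0) by rewrite -e adj_wv ?eqxx //; lia.
rewrite /xi /xo /= e (Uhub H1 H2).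
done.
Qed.

Lemma mulE (n : nat) (A B : 'M[rat]_n) : A * B = A *m B.
Proof. by rewrite mulmxE. Qed.
Lemma oneE (n : nat) : (1 : 'M[rat]_n) = 1%:M.
Proof. by []. Qed.

Lemma iter_out k r d n : (3 <= k)%N -> (2 <= r)%N -> forall i, (0 < i)%N -> (i + n <= r - 1)%N ->
  grover_U (cycle_paths_adj k r) ^+ n *m xo d i = xo d (i + n).
Proof.
move=> hk hr; elim: n => [|n IH] i i0 hi.
  by rewrite expr0 oneE mul1mx addn0.
rewrite exprSr mulE -mulmxA step_out //; last by lia.
rewrite IH //; last by lia.
by rewrite addSnnS.
Qed.

Lemma iter_in k r d n : (3 <= k)%N -> (2 <= r)%N -> forall i, (n < i)%N -> (i <= r - 1)%N ->
  grover_U (cycle_paths_adj k r) ^+ n *m xi d i = xi d (i - n).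
Proof.
move=> hk hr; elim: n => [|n IH] i i0 hi.
  by rewrite expr0 oneE mul1mx subn0.
rewrite exprSr mulE -mulmxA step_in //; try lia.
rewrite IH //; try lia.
by congr xi; lia.
Qed.

Lemma period_neg k r d : (3 <= k)%N -> (2 <= r)%N ->
  grover_U (cycle_paths_adj k r) ^+ ((1 + (r - 2) + 1) + (r - 2)) *m xi d (r - 1) = - xi d (r - 1).
Proof.
move=> hk hr.
rewrite !exprD !mulE -!mulmxA expr1.
rewrite iter_in //; try lia.
rewrite (_ : (r - 1 - (r - 2) = 1)%N); last by lia.
rewrite step_hub // mulmxN iter_out //; try lia.
rewrite (_ : (1 + (r - 2) = r - 1)%N); last by lia.
by rewrite mulmxN step_leaf.
Qed.

Lemma iter_neg k r d t : (3 <= k)%N -> (2 <= r)%N ->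
  grover_U (cycle_paths_adj k r) ^+ (((1 + (r - 2) + 1) + (r - 2)) * t) *m xi d (r - 1)
  = (-1) ^+ t *: xi d (r - 1).
Proof.
move=> hk hr; elim: t => [|t IH].
  by rewrite muln0 expr0 oneE mul1mx scale1r.
rewrite mulnS exprD mulE -mulmxA IH -scalemxAr period_neg // exprS.
by rewrite mulN1r scalerN scaleNr.
Qed.

Theorem theorem3p1 (k r : nat) :
  (3 <= k)%N -> odd k -> (2 <= r)%N ->
  ~ odd_periodic (cycle_paths_adj k r).
Proof.
move=> hk ko hr [m [[m0 [Um _]] om]].
have hN : (0 < k + 2 * (r - 1))%N by lia.
pose d := Ordinal hN.
have := iter_neg d m hk hr.
rewrite [(_ * m)%N]mulnC exprM Um -oneE expr1n oneE mul1mx -signr_odd om expr1 scaleN1r.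
have Hadj : cycle_paths_adj k r (sv d (r - 1)) (sv d (r - 1).-1).
  by rewrite adj_sv ?eqxx //; lia.
have sw : (sv d (r - 1) == wv d (r - 1)) = false.
  apply/negbTE; rewrite -val_eqE val_sv ?val_wv // /spos /wpos; repeat case: ifP => ?; lia.
move/matrixP/(_ (enum_rank (exist (fun e => cycle_paths_adj k r e.1 e.2) (sv d (r - 1), sv d (r - 1).-1) Hadj)) 0).
rewrite /xi /dv !mxE enum_rankK /= eqxx xpair_eqE sw /=.
by rewrite subr0 => /eqP.
Qed.
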